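(* Let $\varepsilon>0$ and $p\in(0,1]$. Let $G$ be an $n$-vertex graph with $e(G)\geq 2n/\varepsilon$ and let $\mu\in\mathcal{M}_{1,p}(G)$. Then \[\mathbb{P}\left[e(\mathbf{G}_\mu)\leq(1-3\varepsilon)p\,e(G)\right]\leq 4n\exp\left(-\frac{\varepsilon^3 p\, e(G)}{6n}\right).\]
   Context: A random graph model on $G$ is a probability measure $\mu$ on subsets of $E(G)$, and $\mathbf{G}_\mu$ is the random spanning subgraph with edge set distributed according to $\mu$. $\mu$ is $1$-independent if for all sets $A,B\subseteq E(G)$ whose edges span disjoint vertex sets, $E(\mathbf{G}_\mu)\cap A$ and $E(\mathbf{G}_\mu)\cap B$ are independent. $\mathcal{M}_{1,p}(G)$ is the set of $1$-independent measures on $G$ in which each edge is present with probability exactly $p$. *)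

(* Defs.v *)
From mathcomp Require Import all_boot all_order all_algebra.
From mathcomp Require Import reals.
From mathcomp Require Import sequences.
From mathcomp.analysis Require Import exp.
Set Implicit Arguments. Unset Strict Implicit. Unset Printing Implicit Defensive.
Import Order.TTheory GRing.Theory Num.Theory.
Local Open Scope ring_scope.

Definition simple_graph (V : finType) (E : {set {set V}}) : Prop :=
  forall f, f \in E -> #|f| = 2%N.

Definition span_vertices (V : finType) (A : {set {set V}}) : {set V} :=
  \bigcup_(f in A) f.

(* A random graph model on G = (V,E): a probability measure mu on the
   (finite) family of subsets of E.  mu S is the probability that the
   random edge set equals S. *)
Definition random_graph_model (R : realType) (V : finType)
    (E : {set {set V}}) (mu : {set {set V}} -> R) : Prop :=
  (forall S : {set {set V}}, 0 <= mu S) /\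
  (forall S : {set {set V}}, ~~ (S \subset E) -> mu S = 0) /\
  \sum_(S : {set {set V}}) mu S = 1.

Definition prob (R : realType) (V : finType) (mu : {set {set V}} -> R)
    (P : pred {set {set V}}) : R :=
  \sum_(S : {set {set V}} | P S) mu S.

Definition one_independent (R : realType) (V : finType)
    (E : {set {set V}}) (mu : {set {set V}} -> R) : Prop :=
  forall A B : {set {set V}}, A \subset E -> B \subset E ->
    [disjoint span_vertices A & span_vertices B] ->
    forall SA SB : {set {set V}},
      prob mu (fun S => (S :&: A == SA) && (S :&: B == SB)) =
      prob mu (fun S => S :&: A == SA) * prob mu (fun S => S :&: B == SB).

Definition M1p (R : realType) (V : finType) (E : {set {set V}}) (p : R)
    (mu : {set {set V}} -> R) : Prop :=
  random_graph_model E mu /\ one_independent E mu /\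
  (forall f, f \in E -> prob mu (fun S => f \in S) = p).

(* Main.v *)
Require Import Defs.
From mathcomp Require Import all_boot all_order all_algebra.
From mathcomp Require Import reals.
From mathcomp Require Import sequences.
From mathcomp.analysis Require Import exp.
From mathcomp Require Import ring lra.
Import Order.TTheory GRing.Theory Num.Theory.
Local Open Scope ring_scope.
Set Implicit Arguments. Unset Strict Implicit. Unset Printing Implicit Defensive.

Section Prob.
Variables (R : realType) (V : finType) (E : {set {set V}}) (mu : {set {set V}} -> R).

Lemma sum_part (T : finType) (g : {set {set V}} -> T) (F : T -> R) :
  \sum_S mu S * F (g S) = \sum_j F j * prob mu (fun S => g S == j).
Proof.
rewrite (partition_big g predT) //=; apply: eq_bigr => j _.
rewrite /prob mulr_sumr; apply: eq_bigr => S /eqP ->; by rewrite mulrC.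
Qed.

Hypothesis indep : one_independent E mu.

Lemma expect_indep (A B : {set {set V}}) (F G : {set {set V}} -> R) :
  A \subset E -> B \subset E ->
  [disjoint span_vertices A & span_vertices B] ->
  \sum_S mu S * (F (S :&: A) * G (S :&: B)) =
  (\sum_S mu S * F (S :&: A)) * (\sum_S mu S * G (S :&: B)).
Proof.
move=> sA sB dAB.
rewrite (sum_part (fun S => (S :&: A, S :&: B)) (fun j => F j.1 * G j.2)).
rewrite !sum_part big_distrlr /= pair_bigA /=; apply: eq_bigr => [[SA SB]] _ /=.
have -> : prob mu (fun S => (S :&: A, S :&: B) == (SA, SB)) =
  prob mu (fun S => (S :&: A == SA) && (S :&: B == SB)).
  by apply: eq_bigl => S; rewrite xpair_eqE.
rewrite indep //; ring.
Qed.

Definition matching (M : {set {set V}}) :=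
  forall f g, f \in M -> g \in M -> f != g -> [disjoint f & g].

Variable p : R.
Hypothesis mu_sum1 : \sum_S mu S = 1.
Hypothesis hp : forall f, f \in E -> prob mu (fun S => f \in S) = p.

Lemma mgf (x : R) : forall M : {set {set V}}, M \subset E -> matching M ->
  \sum_S mu S * x ^+ #|S :&: M| = (1 - p + p * x) ^+ #|M|.
Proof.
move=> M; move: {2}#|M| (erefl #|M|) => n; elim: n M => [|n IH] M cM sM mM.
  rewrite cM (cards0_eq cM) expr0 -mu_sum1; apply: eq_bigr => S _.
  by rewrite setI0 cards0 expr0 mulr1.
have : (0 < #|M|)%N by rewrite cM.
case/card_gt0P => f fM.
have fE : f \in E by apply: (subsetP sM).
have eqc : forall S, #|S :&: M| = ((f \in S) + #|S :&: (M :\ f)|)%N.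
  by move=> S; rewrite (cardsD1 f (S :&: M)) in_setI fM andbT setIDA.
have cM' : #|M :\ f| = n.
  by move: cM; rewrite (cardsD1 f M) fM add1n => -[].
have sM' : M :\ f \subset E by apply: subset_trans sM; apply: subD1set.
have mM' : matching (M :\ f).
  by move=> g h; rewrite !in_setD1 => /andP[_ gM] /andP[_ hM]; apply: mM.
transitivity (\sum_S mu S * ((fun T => x ^+ (f \in T)) (S :&: [set f]) *
                             (fun T => x ^+ #|T|) (S :&: (M :\ f)))).
  apply: eq_bigr => S _ /=.
  by rewrite eqc exprD in_setI in_set1 eqxx andbT.
rewrite (@expect_indep [set f] (M :\ f) (fun T => x ^+ (f \in T)) (fun T => x ^+ #|T|)) //; first last.
- rewrite /span_vertices big_set1; apply: bigcup_disjoint => g.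
  rewrite in_setD1 => /andP[gf gM]; apply: mM => //; by rewrite eq_sym.
- by rewrite sub1set.
rewrite /= IH // cM cM' exprS; congr (_ * _).
rewrite (bigID (fun S : {set {set V}} => f \in S)) /=.
have h1 : \sum_(S : {set {set V}} | f \in S) mu S * x ^+ (f \in S :&: [set f]) = p * x.
  rewrite -(hp fE) /prob mulr_suml; apply: eq_bigr => S fS.
  by rewrite in_setI in_set1 eqxx fS expr1.
have h2 : \sum_(S : {set {set V}} | f \notin S) mu S * x ^+ (f \in S :&: [set f]) = 1 - p.
  rewrite -(hp fE) /prob -mu_sum1 [in RHS](bigID (fun S : {set {set V}} => f \in S)) /= addrC addrK.
  apply: eq_bigr => S fS.
  by rewrite in_setI (negbTE fS) expr0 mulr1.
rewrite h1 h2; ring.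
Qed.

Hypothesis mu_ge0 : forall S, 0 <= mu S.

Lemma chern0 (M : {set {set V}}) (t a : R) : M \subset E -> matching M -> 0 <= t ->
  prob mu (fun S => #|S :&: M|%:R <= a) <=
  expR (t * a) * (1 - p + p * expR (- t)) ^+ #|M|.
Proof.
move=> sM mM t0.
rewrite -mgf // mulr_sumr /prob.
apply: le_trans (_ : \sum_S mu S * expR (t * (a - #|S :&: M|%:R)) <= _).
  rewrite [X in _ <= X](bigID (fun S : {set {set V}} => #|S :&: M|%:R <= a)) /=.
  rewrite -[X in X <= _]addr0; apply: lerD.
    apply: ler_sum => S hS; apply: ler_peMr => //.
    by apply: le_trans (expR_ge1Dx _); rewrite lerDl mulr_ge0 // subr_ge0.
  by apply: sumr_ge0 => S _; apply: mulr_ge0 => //; apply: ltW; apply: expR_gt0.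
rewrite le_eqVlt; apply/orP; left; apply/eqP/eq_bigr => S _.
rewrite -expRM_natl mulrCA -expRD; congr (_ * expR _); ring.
Qed.

Lemma chern (M : {set {set V}}) (eps : R) : M \subset E -> matching M ->
  0 < eps -> eps <= 1 -> 0 <= p -> p <= 1 ->
  prob mu (fun S => #|S :&: M|%:R <= (1 - eps) * p * #|M|%:R) <=
  expR (- (eps ^+ 2 * p * #|M|%:R / 4)).
Proof.
move=> sM mM e0 e1 p0 p1.
set m := #|M|%:R.
have m0 : 0 <= m by [].
have t0 : 0 <= eps / 2 by apply: divr_ge0 => //; apply: ltW.
apply: le_trans (chern0 ((1 - eps) * p * m) sM mM t0) _.
set t := eps / 2; set y := expR (- t).
have y0 : 0 < y by apply: expR_gt0.
have yt : y * (1 + t) <= 1.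
  have := expRxMexpNx_1 t; have := expR_ge1Dx t; rewrite -/y; nra.
have yb : y <= 1 - t + t ^+ 2.
  have t1 : 0 < t by apply: divr_gt0.
  rewrite -(ler_pM2r (_ : 0 < 1 + t)); last by lra.
  apply: le_trans yt _; nra.
have q0 : 0 <= 1 - p + p * y by nra.
apply: le_trans (_ : expR (t * ((1 - eps) * p * m)) * expR (- (p * (1 - y))) ^+ #|M| <= _).
  apply: ler_wpM2l; first exact: ltW (expR_gt0 _).
  apply: lerXn2r => //; first by rewrite nnegrE ltW ?expR_gt0.
  apply: le_trans (expR_ge1Dx _); lra.
rewrite -expRM_natr -expRD ler_expR.
have tE : t = eps / 2 by [].
have pm0 : 0 <= p * m by apply: mulr_ge0.
rewrite tE in yb *.
have h : p * m * (y - (1 - eps / 2 + (eps / 2) ^+ 2)) <= 0.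
  by apply: mulr_ge0_le0 => //; rewrite subr_le0.
rewrite /m in h pm0 *.
nra.
Qed.


Lemma prob_mono (P Q : pred {set {set V}}) :
  (forall S, P S -> Q S) -> prob mu P <= prob mu Q.
Proof.
move=> H; rewrite /prob [X in X <= _]big_mkcond [X in _ <= X]big_mkcond /=.
apply: ler_sum => S _; case: ifP => PS; first by rewrite (H S PS).
by case: ifP.
Qed.

Lemma prob_union (I : finType) (L : pred I) (B : I -> pred {set {set V}}) :
  prob mu (fun S => [exists c, L c && B c S]) <= \sum_(c | L c) prob mu (B c).
Proof.
rewrite /prob (exchange_big_dep predT) //= [X in X <= _]big_mkcond /=.
apply: ler_sum => S _; case: ifP => [/existsP[c /andP[Lc Bc]]|_].
  rewrite (bigD1 c) /=; last by rewrite Lc Bc.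
  by rewrite lerDl; apply: sumr_ge0.
by apply: sumr_ge0.
Qed.

End Prob.

Section Col.
Variables (V : finType) (E : {set {set V}}).
Hypothesis sg : simple_graph E.
Hypothesis n0 : (0 < #|V|)%N.

Definition c0 : 'I_#|V| := Ordinal n0.
Definition cls (f : {set V}) : nat := (\sum_(v in f) (enum_rank v : nat)) %% #|V|.
Definition clo f : 'I_#|V| := insubd c0 (cls f).
Lemma clo_val f : val (clo f) = cls f.
Proof. by rewrite val_insubd ltn_pmod. Qed.
Definition Ccl (c : 'I_#|V|) := [set f in E | clo f == c].

Lemma two_split f w : f \in E -> w \in f -> exists a, f :\ w = [set a].
Proof.
move=> fE wf; apply/cards1P.
by move: (sg fE); rewrite (cardsD1 w f) wf add1n => -[->].
Qed.

Lemma Ccl_matching c : matching (Ccl c).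
Proof.
move=> f g; rewrite !inE => /andP[fE cf] /andP[gE cg] fg; rewrite -setI_eq0; apply/eqP/setP => w; rewrite !inE.
apply/negbTE/negP => /andP[wf wg].
have [a fa] := two_split fE wf; have [b gb] := two_split gE wg.
have sf : (\sum_(v in f) (enum_rank v : nat)) = (enum_rank w + enum_rank a)%N.
  by rewrite (big_setD1 _ wf) fa big_set1.
have sg' : (\sum_(v in g) (enum_rank v : nat)) = (enum_rank w + enum_rank b)%N.
  by rewrite (big_setD1 _ wg) gb big_set1.
have : cls f = cls g by rewrite -!clo_val (eqP cf) (eqP cg).
rewrite /cls sf sg' => /eqP; rewrite eqn_modDl !modn_small ?ltn_ord //.
move=> /eqP/val_inj/enum_rank_inj ab.
move/negP: fg; apply; apply/eqP.
by rewrite -(setD1K wf) -(setD1K wg) fa gb ab.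
Qed.

Lemma Ccl_sub c : Ccl c \subset E.
Proof. by apply/subsetP => f; rewrite inE => /andP[]. Qed.

Lemma sum_Ccl (T : {set {set V}}) : (\sum_c #|T :&: Ccl c|)%N = #|T :&: E|.
Proof.
rewrite -[#|T :&: E|]sum1_card (partition_big clo predT) //=.
apply: eq_bigr => c _; rewrite -[#|T :&: Ccl c|]sum1_card; apply: eq_bigl => f.
by rewrite !inE andbA.
Qed.

End Col.

Unset Implicit Arguments. Set Strict Implicit. Set Printing Implicit Defensive.

Theorem lemma22 (R : realType) (eps p : R) (V : finType)
    (E : {set {set V}}) (mu : {set {set V}} -> R) :
  0 < eps -> 0 < p -> p <= 1 ->
  simple_graph E -> (0 < #|V|)%N ->
  2 * #|V|%:R / eps <= #|E|%:R ->
  M1p E p mu ->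
  prob mu (fun S => #|S|%:R <= (1 - 3 * eps) * p * #|E|%:R)
  <= 4 * #|V|%:R * expR (- (eps ^+ 3 * p * #|E|%:R) / (6 * #|V|%:R)).
Proof.
move=> e0 p0 p1 sgE n0 he [[mu0 [muE mu1]] [ind hp]].
have nn : 0 < #|V|%:R :> R by rewrite ltr0n.
have ee : 0 < #|E|%:R :> R.
  by apply: lt_le_trans he; apply: divr_gt0 => //; apply: mulr_gt0.
set n := #|V|%:R in nn he *; set e := #|E|%:R in ee he *.
set K' := expR (- (eps ^+ 3 * p * e) / (6 * n)).
have K'0 : 0 < K' by apply: expR_gt0.
have rhs0 : 0 <= 4 * n * K' by apply: mulr_ge0; [apply: mulr_ge0 => //; apply: ltW|apply: ltW].
case: (lerP eps 1) => e1; last first.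
  apply: le_trans rhs0; rewrite /prob big_pred0 // => S.
  apply/negbTE; rewrite -ltNge; apply: lt_le_trans (ler0n _ _).
  have h : 0 < p * e by apply: mulr_gt0.
  nra.
set C := Ccl E n0.
pose L := [pred c : 'I_#|V| | eps * e / n <= #|C c|%:R].
pose B c := fun S : {set {set V}} => #|S :&: C c|%:R <= (1 - eps) * p * #|C c|%:R.
have sumC : \sum_c #|C c|%:R = e :> R.
  have -> : e = #|setT :&: E|%:R by rewrite setTI.
  rewrite -(sum_Ccl E n0 setT) natr_sum.
  by apply: eq_bigr => c _; rewrite setTI.
have sumK : forall K : R, \sum_(c : 'I_#|V|) K = K * n.
  by move=> K; rewrite sumr_const card_ord mulr_natr.
have hU := prob_union mu0 L B.
have hM : prob mu (fun S => #|S|%:R <= (1 - 3 * eps) * p * e) <= \sum_(c | L c) prob mu (B c).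
  apply: (le_trans _ hU); apply: prob_mono => // S hS.
  case Ex: [exists c, L c && B c S] => //; exfalso.
  move/negbT: Ex => /existsPn hn.
  have h1 : \sum_(c | L c) #|S :&: C c|%:R <= #|S|%:R :> R.
    apply: le_trans (_ : \sum_c #|S :&: C c|%:R <= _).
      rewrite [X in _ <= X](bigID L) /= lerDl; by apply: sumr_ge0.
    rewrite -natr_sum sum_Ccl ler_nat; apply: subset_leq_card; exact: subsetIl.
  have h2 : \sum_(c | L c) (1 - eps) * p * #|C c|%:R <= \sum_(c | L c) #|S :&: C c|%:R.
    apply: ler_sum => c Lc; have := hn c; rewrite Lc /= /B -ltNge => /ltW //.
  have h3 : (1 - eps) * e <= \sum_(c | L c) #|C c|%:R.
    have h4 : \sum_(c | ~~ L c) #|C c|%:R <= \sum_(c | ~~ L c) (eps * e / n).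
      apply: ler_sum => c; rewrite /L inE -ltNge => /ltW //.
    have h5 : \sum_(c | ~~ L c) (eps * e / n) <= eps * e.
      apply: le_trans (_ : \sum_(c : 'I_#|V|) (eps * e / n) <= _); last first.
        by rewrite sumK divfK // gt_eqF.
      rewrite [X in _ <= X](bigID L) /=.
      rewrite addrC lerDl; apply: sumr_ge0 => c _.
      by apply: divr_ge0; [apply: mulr_ge0|]; apply: ltW.
    move: sumC; rewrite (bigID L) /= => sC; lra.
  rewrite -mulr_sumr in h2.
  have h6 : (1 - eps) * p * ((1 - eps) * e) <= (1 - eps) * p * \sum_(c | L c) #|C c|%:R.
    apply: ler_wpM2l => //.
    by apply: mulr_ge0; [lra|apply: ltW].
  have h7 : 0 < eps * p * e by rewrite !mulr_gt0.
  have h8 : 0 < eps * (eps * p * e) by apply: mulr_gt0.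
  move: hS => /= hS; nra.
apply: (le_trans hM).
set K := expR (- (eps ^+ 3 * p * e / (4 * n))).
apply: le_trans (_ : \sum_(c | L c) K <= _).
  apply: ler_sum => c Lc.
  apply: le_trans (chern ind mu1 hp mu0 (Ccl_sub E n0 c) (@Ccl_matching _ _ sgE n0 c) e0 e1 (ltW p0) p1) _.
  rewrite ler_expR lerN2.
  have -> : eps ^+ 3 * p * e / (4 * n) = eps ^+ 2 * p * (eps * e / n) / 4.
    by field; rewrite gt_eqF.
  apply: ler_wpM2r; first by rewrite invr_ge0.
  apply: ler_wpM2l; first by apply: mulr_ge0; [apply: exprn_ge0; apply: ltW|apply: ltW].
  exact: Lc.
have hK : K <= K'.
  rewrite ler_expR.
  set x := eps ^+ 3 * p * e.
  have x0 : 0 <= x by apply: mulr_ge0; [apply: mulr_ge0; [apply: exprn_ge0|]|]; apply: ltW.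
  have -> : x / (4 * n) = x / (6 * n) + x / (12 * n) by field; rewrite gt_eqF.
  have : 0 <= x / (12 * n) by apply: divr_ge0 => //; apply: mulr_ge0 => //; apply: ltW.
  rewrite mulNr; lra.
have K0 : 0 < K by apply: expR_gt0.
apply: le_trans (_ : \sum_(c : 'I_#|V|) K <= _).
  rewrite [X in _ <= X](bigID L) /= lerDl; apply: sumr_ge0 => c _; exact: ltW.
rewrite sumK; nra.
Qed.
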